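(* There is an absolute constant $C>0$ such that the following holds for every positive integer $n$. Let $N\ge \mathrm{tw}_8(Cn^3)$ and let $\phi:[N]^{(2)}\to\mathbb{R}$. Then there exist $S\subset[N]$ with $|S|=n$ and a function $\sigma:S^{(2)}\to\mathbb{R}$ such that $\sigma\sim\phi$ on $S$ (i.e. $\sigma\sim\phi|_{S^{(2)}}$) and $\sigma$ is exponentially separated.
   Context: $[N]=\{1,\dots,N\}$ with its natural order. For an ordered set $A$, $A^{(k)}=\{(a_1,\dots,a_k)\in A^k:a_1<\dots<a_k\}$. The tower function: $\mathrm{tw}_1(x)=x$, $\mathrm{tw}_k(x)=2^{\mathrm{tw}_{k-1}(x)}$. For functions $\phi,\phi':A^{(2)}\to\mathbb{R}$, write $\phi\sim\phi'$ if there exist $\rho_1,\rho_2:A\to\mathbb{R}$ with $\phi(a,b)=\phi'(a,b)-\rho_1(a)-\rho_2(b)$ for all $(a,b)\in A^{(2)}$. A function $\phi:B\to\mathbb{R}$ on a finite set $B$ is exponentially separated if either $\phi(b)\ge0$ for all $b\in B$ or $\phi(b)\le 0$ for all $b\in B$, and for any two distinct $b,b'\in B$ we have $|\phi(b)|\ge 2|\phi(b')|$ or $|\phi(b')|\ge 2|\phi(b)|$. *)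

(* Defs.v *)
From HB Require Import structures.
From mathcomp Require Import all_boot all_order all_algebra.
From mathcomp Require Import reals.
Set Implicit Arguments. Unset Strict Implicit. Unset Printing Implicit Defensive.
Import Order.TTheory GRing.Theory Num.Theory.
Local Open Scope ring_scope.

(* Tower function: tw 1 x = x, tw (k+1) x = 2 ^ (tw k x). *)
Definition tw (k x : nat) : nat := iter k.-1 (fun y => (2 ^ y)%N) x.

(* [N] = {1,...,N}; a subset S of [N] is a duplicate-free list of elements of [N].
   Functions on A^(2) are functions nat -> nat -> R, only consulted at (a,b)
   with a < b, a b in A. *)
Definition in_range (N : nat) (S : seq nat) : Prop :=
  uniq S /\ (forall a, a \in S -> (1 <= a <= N)%N).

Definition equiv_on {R : realType} (S : seq nat) (phi phi' : nat -> nat -> R) : Prop :=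
  exists rho1 rho2 : nat -> R,
    forall a b, a \in S -> b \in S -> (a < b)%N ->
      phi a b = phi' a b - rho1 a - rho2 b.

Definition exp_separated {R : realType} (S : seq nat) (phi : nat -> nat -> R) : Prop :=
  ((forall a b, a \in S -> b \in S -> (a < b)%N -> 0 <= phi a b) \/
   (forall a b, a \in S -> b \in S -> (a < b)%N -> phi a b <= 0)) /\
  (forall a b a' b', a \in S -> b \in S -> (a < b)%N ->
                     a' \in S -> b' \in S -> (a' < b')%N ->
                     (a, b) <> (a', b') ->
     2 * `|phi a' b'| <= `|phi a b| \/ 2 * `|phi a b| <= `|phi a' b'|).

(* Main.v *)
Require Import Defs.
From HB Require Import structures.
From mathcomp Require Import all_boot all_order all_algebra.
From mathcomp Require Import reals.
From mathcomp Require Import zify ring lra.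
Set Implicit Arguments. Unset Strict Implicit. Unset Printing Implicit Defensive.

(* Proof: 8-uniform hypergraph Ramsey (Erdos-Rado, tower bound)
   applied to a coloring recording signs and comparisons of the second differences
   D(w,x,y,z) = phi(w,y)+phi(x,z)-phi(w,z)-phi(x,y); then an explicit normalization
   (one of four spanning trees depending on the homogeneous "direction" bits). *)

Lemma sorted_subseq_ltn (l s : seq nat) :
  sorted ltn l -> sorted ltn s -> {subset l <= s} -> subseq l s.
Proof.
move=> sl ss sub.
have us : uniq s := sorted_uniq ltn_trans ltnn ss.
apply/(subseq_uniqP us).
apply: (irr_sorted_eq ltn_trans ltnn) => //.
  by apply: sorted_filter => //; exact: ltn_trans.
move=> x; rewrite mem_filter; apply/idP/andP => [xl|[]//].
by split => //; apply: sub.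
Qed.

Fixpoint ksub (s : seq nat) (k : nat) {struct s} : seq (seq nat) :=
  if k is k'.+1 then
    if s is x :: s' then map (cons x) (ksub s' k') ++ ksub s' k else [::]
  else [:: [::]].

Lemma ksub_mem s T : subseq T s -> T \in ksub s (size T).
Proof.
elim: s T => [|x s IH] [|y T] //=.
case: ifP => [/eqP-> sub|_ sub]; rewrite mem_cat.
  by rewrite map_f // IH.
by apply/orP; right; apply: (IH (y :: T)).
Qed.

Lemma leq_exp_succ n k : n ^ k <= n.+1 ^ k.
Proof. by elim: k => // k IH; rewrite !expnS leq_mul. Qed.

Lemma size_ksub s k : size (ksub s k) <= size s ^ k.
Proof.
elim: s k => [|x s IH] [|k] //=.
rewrite size_cat size_map.
apply: (leq_trans (leq_add (IH k) (IH k.+1))).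
have := leq_exp_succ (size s) k; rewrite !expnS; nia.
Qed.

Lemma count_split (f : nat -> nat) r (P : seq nat) :
  count (fun z => f z < r.+1) P = count (fun z => f z < r) P + count (fun z => f z == r) P.
Proof.
elim: P => //= z P ->.
case: (ltngtP (f z) r) => h /=; lia.
Qed.

Lemma php (f : nat -> nat) (P : seq nat) r q :
  0 < r -> (forall z, f z < r) -> r * q <= size P ->
  exists c, q <= count (fun z => f z == c) P.
Proof.
move=> r0 fr H.
case: (boolP [exists c : 'I_r, q <= count (fun z => f z == c) P]).
  by case/existsP => c hc; exists (nat_of_ord c).
rewrite negb_exists => /forallP hall.
have key : forall r', r' <= r -> count (fun z => f z < r') P <= r' * q.-1.
  elim => [|r' IH] hr; first by rewrite (eq_count (a2 := pred0)) ?count_pred0 // => z; rewrite ltn0.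
  rewrite count_split mulSnr; apply: leq_add; first by apply: IH; exact: ltnW.
  have := hall (Ordinal hr); rewrite -ltnNge /=; lia.
have := key r (leqnn r).
have -> : count (fun z => f z < r) P = size P.
  by apply/eqP; rewrite -all_count; apply/allP => z _; apply: fr.
case: q H hall {key} => [|q] H hall; last by nia.
by move: (hall (Ordinal r0)); rewrite leq0n.
Qed.

Lemma refine_pool (chi : seq nat -> nat) r (Ts : seq (seq nat)) (P : seq nat) m :
  0 < r -> (forall T, chi T < r) -> r ^ size Ts * m <= size P ->
  exists P', [/\ subseq P' P, m <= size P' &
     forall T z z', T \in Ts -> z \in P' -> z' \in P' -> chi (rcons T z) = chi (rcons T z')].
Proof.
move=> r0 hchi.
elim: Ts P => [|T Ts IH] P H.
  by exists P; split => //; rewrite expn0 mul1n in H.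
have [c hc] : exists c, r ^ size Ts * m <= count (fun z => chi (rcons T z) == c) P.
  apply: (@php (fun z => chi (rcons T z)) P r) => //.
  by rewrite /= expnS -mulnA in H.
have [P' [s1 s2 s3]] := IH _ (leq_trans hc (eq_leq (esym (size_filter _ _)))).
exists P'; split => //.
  exact: subseq_trans s1 (filter_subseq _ _).
move=> T0 z z'; rewrite in_cons => /orP[/eqP->|hT] hz hz'; last exact: s3.
have /(mem_subseq s1) := hz; have /(mem_subseq s1) := hz'.
by rewrite !mem_filter => /andP[/eqP-> _] /andP[/eqP-> _].
Qed.

Definition Inv (k : nat) (chi : seq nat -> nat) (A P : seq nat) :=
  forall T z z', subseq T A -> size T = k -> z \in A ++ P -> z' \in A ++ P ->
   all (fun y => y < z) T -> all (fun y => y < z') T -> chi (rcons T z) = chi (rcons T z').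

Fixpoint Gb (k r l t : nat) : nat :=
  if l is l'.+1 then (r ^ (t.+1 ^ k)) * Gb k r l' t.+1 + 1 else 0.

Lemma subseq_rcons_notin (T A : seq nat) x :
  subseq T (rcons A x) -> x \notin T -> subseq T A.
Proof.
elim: A T => [|a A IH] [|y T] //=.
- by case: ifP => // /eqP-> _; rewrite in_cons eqxx.
- case: ifP => [/eqP-> h|_ h] hx.
    apply: IH => //; move: hx; by rewrite in_cons negb_or => /andP[].
  exact: IH.
Qed.

Lemma eh k r chi : 0 < k -> 0 < r -> (forall T, chi T < r) ->
  forall l t A P, sorted ltn (A ++ P) -> size A = t -> Inv k chi A P -> Gb k r l t <= size P ->
  exists A1, [/\ subseq A1 P, size A1 = l & Inv k chi (A ++ A1) [::]].
Proof.
move=> k0 r0 hchi; elim => [|l IH] t A P srt sA inv hG.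
  exists [::]; split; [exact: sub0seq | by [] | ].
  move=> T z z' sT szT hz hz' a1 a2; apply: inv => //.
    by rewrite cats0 in sT.
  by rewrite mem_cat; move: hz; rewrite !cats0 => ->.
  by rewrite mem_cat; move: hz'; rewrite !cats0 => ->.
case: P srt inv hG => [|x P1] srt inv hG; first by rewrite /= addn1 in hG.
set Ts := ksub (rcons A x) k.
have hTs : size Ts <= t.+1 ^ k by rewrite /Ts (leq_trans (size_ksub _ _)) // size_rcons sA.
have [P2 [s1 s2 s3]] : exists P2, [/\ subseq P2 P1, Gb k r l t.+1 <= size P2 &
     forall T z z', T \in Ts -> z \in P2 -> z' \in P2 -> chi (rcons T z) = chi (rcons T z')].
  apply: (@refine_pool chi r Ts P1) => //.
  move: hG => /=; rewrite addn1 ltnS; move=> hG; apply: (leq_trans _ hG).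
  by rewrite leq_mul2r leq_pexp2l ?orbT.
have srt2 : sorted ltn (rcons A x ++ P2).
  apply: (subseq_sorted ltn_trans _ srt).
  by rewrite cat_rcons cat_subseq //= eqxx.
have ltA : forall y, y \in A -> y < x.
  move: srt; rewrite sorted_pairwise; last exact: ltn_trans.
  rewrite pairwise_cat => /and3P[h _ _] y yA.
  by move/allP: h => /(_ y yA) /allP /(_ x); rewrite in_cons eqxx => /(_ isT).
have inv2 : Inv k chi (rcons A x) P2.
  move=> T z z' sT szT hz hz' a1 a2.
  case: (boolP (x \in T)) => xT.
    have zP : forall w, w \in rcons A x ++ P2 -> all (fun y => y < w) T -> w \in P2.
      move=> w; rewrite mem_cat mem_rcons in_cons => /orP[/orP[/eqP->|wA]|//] /allP /(_ x xT).
        by rewrite ltnn.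
      by move=> h; have := ltA _ wA; lia.
    apply: s3; last by apply: zP.
      by rewrite /Ts -szT ksub_mem.
    by apply: zP.
  have sT' := subseq_rcons_notin sT xT.
  have mm : forall w, w \in rcons A x ++ P2 -> w \in A ++ x :: P1.
    move=> w; rewrite mem_cat mem_rcons in_cons mem_cat in_cons => /orP[/orP[->|->]|h].
    - by rewrite orbT.
    - by [].
    by rewrite (mem_subseq s1 h) !orbT.
  by apply: inv => //; apply: mm.
have sA2 : size (rcons A x) = t.+1 by rewrite size_rcons sA.
have [A1 [t1 t2 t3]] := IH _ _ _ srt2 sA2 inv2 s2.
exists (x :: A1); split => //=.
- by rewrite eqxx (subseq_trans t1 s1).
- by rewrite t2.
by rewrite -cat_rcons.
Qed.

Fixpoint RB (r m k : nat) : nat :=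
  if k is k'.+1 then Gb k r (RB r m k').+1 0 else r * m.

Lemma ramsey r m : 0 < r -> forall k (chi : seq nat -> nat) L,
  (forall T, chi T < r) -> sorted ltn L -> RB r m k <= size L ->
  exists H, [/\ subseq H L, size H = m &
    forall U V, subseq U H -> subseq V H -> size U = k.+1 -> size V = k.+1 -> chi U = chi V].
Proof.
move=> r0; elim => [|k IH] chi L hchi srt hL.
  have [c hc] := php (f := fun z => chi [:: z]) r0 (fun z => hchi _) hL.
  exists (take m [seq z <- L | chi [:: z] == c]); split.
  - exact: subseq_trans (take_subseq _ _) (filter_subseq _ _).
  - by rewrite size_take size_filter; case: ltngtP hc => //; lia.
  move=> [|u [|u' U]] [|v [|v' V]] //= hU hV _ _.
  rewrite !sub1seq in hU hV.
  by move: (mem_take hU) (mem_take hV); rewrite !mem_filter => /andP[/eqP-> _] /andP[/eqP-> _].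
have inv0 : Inv k.+1 chi [::] L.
  by move=> T z z' /= /eqP hT; rewrite hT.
have [A1 [t1 t2 t3]] := @eh k.+1 r chi (ltn0Sn _) r0 hchi (RB r m k).+1 0 [::] L srt erefl inv0 hL.
rewrite /= in t3.
case/lastP: A1 t1 t2 t3 => [|A' zl] t1 t2 t3; first by [].
have srtA : sorted ltn (rcons A' zl) := subseq_sorted ltn_trans t1 srt.
have ltA : forall y, y \in A' -> y < zl.
  move: srtA; rewrite sorted_pairwise; last exact: ltn_trans.
  by rewrite pairwise_rcons => /andP[/allP h _] y /h.
have hA' : RB r m k <= size A' by move: t2; rewrite size_rcons => -[->].
have [H [h1 h2 h3]] := IH (fun T => chi (rcons T zl)) A' (fun T => hchi _)
   (subseq_sorted ltn_trans (subseq_rcons _ _) srtA) hA'.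
have sHL : subseq H L := subseq_trans h1 (subseq_trans (subseq_rcons _ _) t1).
have srtH : sorted ltn H := subseq_sorted ltn_trans sHL srt.
have key : forall U, subseq U H -> size U = k.+2 ->
    exists TU, [/\ subseq TU H, size TU = k.+1 & chi U = chi (rcons TU zl)].
  move=> U; case/lastP: U => [|TU zU] //; rewrite size_rcons => sU [szU].
  have sTU : subseq TU H := subseq_trans (subseq_rcons _ _) sU.
  exists TU; split => //.
  apply: t3 => //.
  - exact: subseq_trans sTU (subseq_trans h1 (subseq_rcons _ _)).
  - by rewrite cats0 (mem_subseq (subseq_trans h1 (subseq_rcons _ _)))
       // (mem_subseq sU) // mem_rcons mem_head.
  - by rewrite cats0 mem_rcons mem_head.
  - have := subseq_sorted ltn_trans sU srtH.
    rewrite sorted_pairwise; last exact: ltn_trans.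
    by rewrite pairwise_rcons => /andP[].
  - apply/allP => y yT; apply: ltA.
    exact: (mem_subseq h1 (mem_subseq sTU yT)).
exists H; split => //.
move=> U V sU sV szU szV.
have [TU [a1 a2 ->]] := key U sU szU.
have [TV [b1 b2 ->]] := key V sV szV.
exact: h3.
Qed.

Lemma Gb_bound k r : 0 < k -> 0 < r -> forall l t,
  Gb k r l t <= (2 * r) ^ (l * (t + l + 1) ^ k).
Proof.
move=> k0 r0; elim => [|l IH] t //=.
set E := (t + l.+1 + 1) ^ k.
have E1 : 1 <= E by rewrite /E expn_gt0 addn1.
have hE : (t.+1) ^ k <= E by rewrite /E leq_exp2r //; lia.
have := IH t.+1; rewrite (_ : t.+1 + l + 1 = t + l.+1 + 1); last by lia.
rewrite -/E => h1.
have X1 : 1 <= (2 * r) ^ (l * E) by rewrite expn_gt0 muln_gt0 r0.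
have h2 : r ^ t.+1 ^ k <= r ^ E by rewrite leq_pexp2l.
have h3 : 2 * r ^ E <= (2 * r) ^ E.
  rewrite expnMn leq_mul2r; apply/orP; right.
  by rewrite -{1}(expn1 2) leq_pexp2l.
rewrite [l.+1 * E]mulSn expnD.
have : r ^ t.+1 ^ k * Gb k r l t.+1 <= r ^ E * (2 * r) ^ (l * E) by rewrite leq_mul.
have : 2 * r ^ E * (2 * r) ^ (l * E) <= (2 * r) ^ E * (2 * r) ^ (l * E) by rewrite leq_mul2r h3 orbT.
have : 0 < r ^ E * (2 * r) ^ (l * E) by rewrite muln_gt0 X1 expn_gt0 r0.
set a := r ^ E; set X := (2 * r) ^ (l * E); set b := r ^ t.+1 ^ k; set Y := (2 * r) ^ E.
rewrite -mulnA; lia.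
Qed.

Definition f2 (y : nat) := 2 ^ y.

Lemma iter_mono i y y' : y <= y' -> iter i f2 y <= iter i f2 y'.
Proof. by elim: i => //= i IH h; rewrite /f2 leq_pexp2l // IH. Qed.

Lemma iter_ge i y : y <= iter i f2 y.
Proof. elim: i => //= i IH; rewrite /f2; apply: (leq_trans IH); exact: ltnW (ltn_expl _ (ltnSn 1)). Qed.

Lemma pow_add_le a c : 2 ^ a + c <= 2 ^ (a + c).
Proof.
rewrite expnD.
have : c < 2 ^ c := ltn_expl _ (ltnSn 1).
have : 1 <= 2 ^ a by rewrite expn_gt0.
nia.
Qed.

Lemma iter_add i y c : iter i f2 y + c <= iter i f2 (y + c).
Proof.
elim: i => //= i IH; rewrite /f2.
apply: leq_trans (pow_add_le _ _) _.
by rewrite leq_pexp2l.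
Qed.

Lemma iter_mul i e y : 2 <= e -> 2 <= y -> e * iter i f2 y <= iter i f2 (e * y).
Proof.
move=> e2 y2; elim: i => //= i IH; rewrite /f2.
have h1 : e * 2 ^ iter i f2 y <= 2 ^ (iter i f2 y + e).
  rewrite expnD mulnC leq_mul2l; apply/orP; right; exact: ltnW (ltn_expl _ (ltnSn 1)).
apply: leq_trans h1 _; rewrite leq_pexp2l //.
apply: leq_trans (iter_add _ _ _) _.
apply: iter_mono; nia.
Qed.

Lemma tower_step rho j B y e : 2 <= e -> 2 <= y -> B <= iter j.+1 f2 y ->
  (2 ^ rho.+1) ^ ((B + 2) ^ e) <= iter j.+2 f2 (e * y + 2 * e + rho.+1).
Proof.
move=> e2 y2 hB0.
set a := iter j f2 y.
have hB : B <= 2 ^ a := hB0.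
rewrite [iter j.+2 _ _]/= /f2 -/f2.
have h1 : B + 2 <= 2 ^ (a + 2).
  rewrite expnD; have : 1 <= 2 ^ a by rewrite expn_gt0.
  move: hB; rewrite (_ : 2 ^ 2 = 4) //; lia.
have h2 : (B + 2) ^ e <= 2 ^ ((a + 2) * e) by rewrite expnM leq_exp2r // ltnW.
have h3 : (2 ^ rho.+1) ^ ((B + 2) ^ e) <= 2 ^ (2 ^ (rho.+1 + (a + 2) * e)).
  rewrite -expnM; apply: leq_pexp2l => //; rewrite expnD.
  apply: leq_mul; first exact: ltnW (ltn_expl _ (ltnSn 1)).
  exact: h2.
apply: leq_trans h3 _.
apply: leq_pexp2l => //; apply: leq_pexp2l => //.
have : e * a <= iter j f2 (e * y) by apply: iter_mul.
have := iter_add j (e * y) (2 * e + rho.+1).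
move=> h4 h5; rewrite -addnA.
apply: (leq_trans _ h4); lia.
Qed.

Fixpoint cY (rho k : nat) : nat :=
  if k is k'.+1 then
    (if k' is _.+1 then k.+1 * cY rho k' + 2 * k.+1 + rho.+1 else 1)
  else 1.

Lemma cY_ge1 rho k : 1 <= cY rho k.
Proof. case: k => //= k; case: k => // k; lia. Qed.

Lemma RB_bound rho m : forall k, 0 < k ->
  RB (2 ^ rho) m k <= iter k f2 (cY rho k * (rho.+1 * (2 ^ rho * m + 2) ^ 2)).
Proof.
have r0 : 0 < 2 ^ rho by rewrite expn_gt0.
set y1 := rho.+1 * (2 ^ rho * m + 2) ^ 2.
have y14 : 4 <= y1.
  rewrite /y1; have : 2 <= 2 ^ rho * m + 2 by lia.
  move=> h; have : 4 <= (2 ^ rho * m + 2) ^ 2 by rewrite (_ : 4 = 2 ^ 2) // leq_exp2r.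
  nia.
elim => // k IH _.
case: k IH => [|k] IH.
  change (RB (2 ^ rho) m 1) with (Gb 1 (2 ^ rho) (2 ^ rho * m).+1 0).
  rewrite [cY rho 1]/= mul1n [iter 1 _ _]/= /f2 /y1.
  apply: leq_trans (Gb_bound (ltn0Sn 0) r0 _ _) _.
  rewrite (_ : 2 * 2 ^ rho = 2 ^ rho.+1); last by rewrite expnS.
  rewrite -expnM; apply: leq_pexp2l => //.
  rewrite !expn1 add0n.
  have : 2 ^ rho * m + 1 < 2 ^ rho * m + 2 by lia.
  nia.
have IH' := IH (ltn0Sn _).
change (RB (2 ^ rho) m k.+2) with (Gb k.+2 (2 ^ rho) (RB (2 ^ rho) m k.+1).+1 0).
apply: leq_trans (Gb_bound (ltn0Sn k.+1) r0 _ _) _.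
rewrite (_ : 2 * 2 ^ rho = 2 ^ rho.+1); last by rewrite expnS.
set B := RB (2 ^ rho) m k.+1 in IH' *.
have h1 : (2 ^ rho.+1) ^ ((B.+1) * (0 + B.+1 + 1) ^ k.+2) <= (2 ^ rho.+1) ^ ((B + 2) ^ k.+3).
  rewrite leq_pexp2l ?expn_gt0 // [in X in _ <= X]expnS.
  rewrite add0n addn1 (_ : B.+2 = B + 2); last by lia.
  by rewrite leq_mul2r; apply/orP; right; lia.
apply: leq_trans h1 _.
have y2 : 2 <= cY rho k.+1 * y1 by have := cY_ge1 rho k.+1; nia.
have e2 : 2 <= k.+3 by lia.
apply: leq_trans (@tower_step rho k B (cY rho k.+1 * y1) k.+3 e2 y2 IH') _.
apply: iter_mono.
rewrite [cY rho k.+2]/= -/(cY rho k.+1).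
have := cY_ge1 rho k.+1; nia.
Qed.

Import Order.TTheory GRing.Theory Num.Theory.
Local Open Scope ring_scope.

Definition DD {R : realType} (Phi : nat -> nat -> R) (w x y z : nat) : R :=
  Phi w y + Phi x z - Phi w z - Phi x y.

Definition Idx := ('I_8 * 'I_8 * 'I_8 * 'I_8)%type.

Definition Dn {R : realType} (Phi : nat -> nat -> R) (l : seq nat) (I : Idx) : R :=
  let: (i0, i1, i2, i3) := I in
  DD Phi (nth 0%N l i0) (nth 0%N l i1) (nth 0%N l i2) (nth 0%N l i3).

Definition cmp {R : realType} (Phi : nat -> nat -> R) (l : seq nat) (I J : Idx) : bool :=
  `|Dn Phi l J| <= `|Dn Phi l I|.

Definition mkI (a b c d : nat) : Idx := (inord a, inord b, inord c, inord d).

Section Main.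
Variable R : realType.
Variable Phi : nat -> nat -> R.
Variable M0 : nat.

Local Notation D := (DD Phi).

Hypothesis Hpos : forall w x y z, (w < x)%N -> (x < y)%N -> (y < z)%N -> (z < M0)%N -> 0 <= D w x y z.
Hypothesis Hhom : forall l l', sorted ltn l -> sorted ltn l' -> size l = 8%N -> size l' = 8%N ->
  all (fun i => i < M0 + 8)%N l -> all (fun i => i < M0 + 8)%N l' ->
  forall I J, cmp Phi l I J = cmp Phi l' I J.

Lemma Dadd_l w x x' y z : D w x y z + D x x' y z = D w x' y z.
Proof. rewrite /DD; lra. Qed.
Lemma Dadd_r w x y z z' : D w x y z + D w x z z' = D w x y z'.
Proof. rewrite /DD; lra. Qed.
Lemma Ddeg_l w y z : D w w y z = 0.
Proof. rewrite /DD; lra. Qed.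
Lemma Ddeg_r w x y : D w x y y = 0.
Proof. rewrite /DD; lra. Qed.

Lemma Dn_mk l a b c d : (a < 8)%N -> (b < 8)%N -> (c < 8)%N -> (d < 8)%N ->
  Dn Phi l (mkI a b c d) = D (nth 0%N l a) (nth 0%N l b) (nth 0%N l c) (nth 0%N l d).
Proof. by move=> ha hb hc hd; rewrite /Dn /mkI !inordK. Qed.

Definition l0 := iota 0 8.

Lemma l0_ok : [/\ sorted ltn l0, size l0 = 8%N & all (fun i => i < M0 + 8)%N l0].
Proof. split; [exact: iota_ltn_sorted | by [] | apply/allP => i; rewrite mem_iota; lia]. Qed.

Definition bL := cmp Phi l0 (mkI 1 2 3 4) (mkI 0 1 3 4).
Definition bR := cmp Phi l0 (mkI 0 1 3 4) (mkI 0 1 2 3).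

Lemma Lbit_eq w x x' y z : (w < x)%N -> (x < x')%N -> (x' < y)%N -> (y < z)%N -> (z < M0)%N ->
  (D w x y z <= D x x' y z) = bL.
Proof.
move=> h1 h2 h3 h4 h5.
have [s0 z0 a0] := l0_ok.
set l := [:: w; x; x'; y; z; M0; M0.+1; M0.+2].
have sl : sorted ltn l by rewrite /l /=; lia.
have al : all (fun i => i < M0 + 8)%N l by rewrite /l /=; lia.
rewrite /bL -(Hhom sl s0 erefl z0 al a0) /cmp !Dn_mk //= !ger0_norm //; apply: Hpos; lia.
Qed.

Lemma Rbit_eq w x y z z' : (w < x)%N -> (x < y)%N -> (y < z)%N -> (z < z')%N -> (z' < M0)%N ->
  (D w x y z <= D w x z z') = bR.
Proof.
move=> h1 h2 h3 h4 h5.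
have [s0 z0 a0] := l0_ok.
set l := [:: w; x; y; z; z'; M0; M0.+1; M0.+2].
have sl : sorted ltn l by rewrite /l /=; lia.
have al : all (fun i => i < M0 + 8)%N l by rewrite /l /=; lia.
rewrite /bR -(Hhom sl s0 erefl z0 al a0) /cmp !Dn_mk //= !ger0_norm //; apply: Hpos; lia.
Qed.

Lemma Ldbl_p w x x' y z : bL -> (w < x)%N -> (x < x')%N -> (x' < y)%N -> (y < z)%N -> (z < M0)%N ->
  2 * D w x y z <= D w x' y z.
Proof.
move=> hb h1 h2 h3 h4 h5; have := Lbit_eq h1 h2 h3 h4 h5; rewrite hb => h.
rewrite -(Dadd_l w x x'); lra.
Qed.

Lemma Ldbl_n w x x' y z : ~~ bL -> (w < x)%N -> (x < x')%N -> (x' < y)%N -> (y < z)%N -> (z < M0)%N ->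
  2 * D x x' y z <= D w x' y z.
Proof.
move=> hb h1 h2 h3 h4 h5; have := Lbit_eq h1 h2 h3 h4 h5; rewrite (negbTE hb) => /negbT.
rewrite -ltNge => h; rewrite -(Dadd_l w x x'); lra.
Qed.

Lemma Rdbl_p w x y z z' : bR -> (w < x)%N -> (x < y)%N -> (y < z)%N -> (z < z')%N -> (z' < M0)%N ->
  2 * D w x y z <= D w x y z'.
Proof.
move=> hb h1 h2 h3 h4 h5; have := Rbit_eq h1 h2 h3 h4 h5; rewrite hb => h.
rewrite -(Dadd_r w x y z z'); lra.
Qed.

Lemma Rdbl_n w x y z z' : ~~ bR -> (w < x)%N -> (x < y)%N -> (y < z)%N -> (z < z')%N -> (z' < M0)%N ->
  2 * D w x z z' <= D w x y z'.
Proof.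
move=> hb h1 h2 h3 h4 h5; have := Rbit_eq h1 h2 h3 h4 h5; rewrite (negbTE hb) => /negbT.
rewrite -ltNge => h; rewrite -(Dadd_r w x y z z'); lra.
Qed.

Ltac ll := lia.

Lemma Ldom_p w x x' y z : bL -> (w < x)%N -> (x + 4 <= x')%N -> (x' < y)%N -> (y < z)%N -> (z < M0)%N ->
  15 * D w x y z <= D x x' y z.
Proof.
move=> hb h1 h2 h3 h4 h5.
have b1 := @Ldbl_p w x x.+1 y z hb ltac:(ll) ltac:(ll) ltac:(ll) ltac:(ll) ltac:(ll).
have b2 := @Ldbl_p w x.+1 x.+2 y z hb ltac:(ll) ltac:(ll) ltac:(ll) ltac:(ll) ltac:(ll).
have b3 := @Ldbl_p w x.+2 x.+3 y z hb ltac:(ll) ltac:(ll) ltac:(ll) ltac:(ll) ltac:(ll).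
have b4 := @Ldbl_p w x.+3 x' y z hb ltac:(ll) ltac:(ll) ltac:(ll) ltac:(ll) ltac:(ll).
have e := Dadd_l w x x' y z.
lra.
Qed.

Lemma Ldom_n w x x' y z : ~~ bL -> (w + 4 <= x)%N -> (x < x')%N -> (x' < y)%N -> (y < z)%N -> (z < M0)%N ->
  15 * D x x' y z <= D w x y z.
Proof.
move=> hb h1 h2 h3 h4 h5.
have b1 := @Ldbl_n (x - 1) x x' y z hb ltac:(ll) ltac:(ll) ltac:(ll) ltac:(ll) ltac:(ll).
have b2 := @Ldbl_n (x - 2) (x - 1) x' y z hb ltac:(ll) ltac:(ll) ltac:(ll) ltac:(ll) ltac:(ll).
have b3 := @Ldbl_n (x - 3) (x - 2) x' y z hb ltac:(ll) ltac:(ll) ltac:(ll) ltac:(ll) ltac:(ll).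
have b4 := @Ldbl_n w (x - 3) x' y z hb ltac:(ll) ltac:(ll) ltac:(ll) ltac:(ll) ltac:(ll).
have e := Dadd_l w x x' y z.
lra.
Qed.

Lemma Rdom_p w x y z z' : bR -> (w < x)%N -> (x < y)%N -> (y < z)%N -> (z + 4 <= z')%N -> (z' < M0)%N ->
  15 * D w x y z <= D w x z z'.
Proof.
move=> hb h1 h2 h3 h4 h5.
have b1 := @Rdbl_p w x y z z.+1 hb ltac:(ll) ltac:(ll) ltac:(ll) ltac:(ll) ltac:(ll).
have b2 := @Rdbl_p w x y z.+1 z.+2 hb ltac:(ll) ltac:(ll) ltac:(ll) ltac:(ll) ltac:(ll).
have b3 := @Rdbl_p w x y z.+2 z.+3 hb ltac:(ll) ltac:(ll) ltac:(ll) ltac:(ll) ltac:(ll).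
have b4 := @Rdbl_p w x y z.+3 z' hb ltac:(ll) ltac:(ll) ltac:(ll) ltac:(ll) ltac:(ll).
have e := Dadd_r w x y z z'.
lra.
Qed.

Lemma Rdom_n w x y z z' : ~~ bR -> (w < x)%N -> (x < y)%N -> (y + 4 <= z)%N -> (z < z')%N -> (z' < M0)%N ->
  15 * D w x z z' <= D w x y z.
Proof.
move=> hb h1 h2 h3 h4 h5.
have b1 := @Rdbl_n w x (z - 1) z z' hb ltac:(ll) ltac:(ll) ltac:(ll) ltac:(ll) ltac:(ll).
have b2 := @Rdbl_n w x (z - 2) (z - 1) z' hb ltac:(ll) ltac:(ll) ltac:(ll) ltac:(ll) ltac:(ll).
have b3 := @Rdbl_n w x (z - 3) (z - 2) z' hb ltac:(ll) ltac:(ll) ltac:(ll) ltac:(ll) ltac:(ll).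
have b4 := @Rdbl_n w x y (z - 3) z' hb ltac:(ll) ltac:(ll) ltac:(ll) ltac:(ll) ltac:(ll).
have e := Dadd_r w x y z z'.
lra.
Qed.

Lemma Lgrow_p c c' y z : bL -> (c < c')%N -> (c' + 3 < y)%N -> (y < z)%N -> (z < M0)%N ->
  8 * D c c' y z <= D c (c' + 3) y z.
Proof.
move=> hb h1 h2 h3 h4.
have b1 := @Ldbl_p c c' c'.+1 y z hb ltac:(ll) ltac:(ll) ltac:(ll) ltac:(ll) ltac:(ll).
have b2 := @Ldbl_p c c'.+1 c'.+2 y z hb ltac:(ll) ltac:(ll) ltac:(ll) ltac:(ll) ltac:(ll).
have b3 := @Ldbl_p c c'.+2 (c' + 3) y z hb ltac:(ll) ltac:(ll) ltac:(ll) ltac:(ll) ltac:(ll).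
lra.
Qed.

Lemma Lgrow_n c c' y z : ~~ bL -> (3 <= c)%N -> (c < c')%N -> (c' < y)%N -> (y < z)%N -> (z < M0)%N ->
  8 * D c c' y z <= D (c - 3) c' y z.
Proof.
move=> hb h0 h1 h2 h3 h4.
have b1 := @Ldbl_n (c - 1) c c' y z hb ltac:(ll) ltac:(ll) ltac:(ll) ltac:(ll) ltac:(ll).
have b2 := @Ldbl_n (c - 2) (c - 1) c' y z hb ltac:(ll) ltac:(ll) ltac:(ll) ltac:(ll) ltac:(ll).
have b3 := @Ldbl_n (c - 3) (c - 2) c' y z hb ltac:(ll) ltac:(ll) ltac:(ll) ltac:(ll) ltac:(ll).
lra.
Qed.

Lemma Rgrow_p w x d d' : bR -> (w < x)%N -> (x < d)%N -> (d < d')%N -> (d' + 3 < M0)%N ->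
  8 * D w x d d' <= D w x d (d' + 3).
Proof.
move=> hb h1 h2 h3 h4.
have b1 := @Rdbl_p w x d d' d'.+1 hb ltac:(ll) ltac:(ll) ltac:(ll) ltac:(ll) ltac:(ll).
have b2 := @Rdbl_p w x d d'.+1 d'.+2 hb ltac:(ll) ltac:(ll) ltac:(ll) ltac:(ll) ltac:(ll).
have b3 := @Rdbl_p w x d d'.+2 (d' + 3) hb ltac:(ll) ltac:(ll) ltac:(ll) ltac:(ll) ltac:(ll).
lra.
Qed.

Lemma Rgrow_n w x d d' : ~~ bR -> (w < x)%N -> (x + 3 < d)%N -> (d < d')%N -> (d' < M0)%N ->
  8 * D w x d d' <= D w x (d - 3) d'.
Proof.
move=> hb h1 h2 h3 h4.
have b1 := @Rdbl_n w x (d - 1) d d' hb ltac:(ll) ltac:(ll) ltac:(ll) ltac:(ll) ltac:(ll).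
have b2 := @Rdbl_n w x (d - 2) (d - 1) d' hb ltac:(ll) ltac:(ll) ltac:(ll) ltac:(ll) ltac:(ll).
have b3 := @Rdbl_n w x (d - 3) (d - 2) d' hb ltac:(ll) ltac:(ll) ltac:(ll) ltac:(ll) ltac:(ll).
lra.
Qed.

End Main.

Definition D4 {R : realType} (Phi : nat -> nat -> R) (X : seq nat) : R :=
  DD Phi (nth 0%N X 0) (nth 0%N X 1) (nth 0%N X 2) (nth 0%N X 3).

Definition mv (p p' u : nat) : nat := if u == p then p' else u.

Section Xfer.
Variable R : realType.
Variable Phi : nat -> nat -> R.
Variable M0 : nat.
Hypothesis Hhom : forall l l', sorted ltn l -> sorted ltn l' -> size l = 8%N -> size l' = 8%N ->
  all (fun i => i < M0 + 8)%N l -> all (fun i => i < M0 + 8)%N l' ->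
  forall I J, cmp Phi l I J = cmp Phi l' I J.

Definition okmv (p p' u : nat) : bool :=
  [|| u == p, (u < p)%N && (u < p')%N | (p < u)%N && (p' < u)%N].

Lemma mv_homo p p' u v : okmv p p' u -> okmv p p' v -> (u < v)%N -> (mv p p' u < mv p p' v)%N.
Proof.
rewrite /okmv /mv.
case: (u =P p) => [->|hu]; case: (v =P p) => [->|hv] //=; try lia.
Qed.

Lemma xfer (X Y : seq nat) p p' : size X = 4%N -> size Y = 4%N ->
  all (fun u => u < M0)%N (X ++ Y) -> (p < M0)%N -> (p' < M0)%N ->
  (forall u, u \in X ++ Y -> okmv p p' u) ->
  (`|D4 Phi Y| <= `|D4 Phi X|) = (`|D4 Phi (map (mv p p') Y)| <= `|D4 Phi (map (mv p p') X)|).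
Proof.
move=> sX sY aU pM p'M okU.
set U := X ++ Y.
set filt := [seq i <- iota 0 M0 | i \in U].
have uf : uniq filt by rewrite filter_uniq // iota_uniq.
have c8 : (size filt <= 8)%N.
  rewrite -(_ : size U = 8%N); last by rewrite size_cat sX sY.
  by apply: uniq_leq_size => // u; rewrite mem_filter => /andP[].
set e := filt ++ iota M0 (8 - size filt).
have se : size e = 8%N by rewrite size_cat size_iota; lia.
have fltM : forall u, u \in filt -> (u < M0)%N by move=> u; rewrite mem_filter mem_iota => /andP[_]; lia.
have srt : sorted ltn e.
  rewrite sorted_pairwise; last exact: ltn_trans.
  have s1 : pairwise ltn filt.
    by rewrite -sorted_pairwise ?sorted_filter ?iota_ltn_sorted //; exact: ltn_trans.
  have s2 : pairwise ltn (iota M0 (8 - size filt)).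
    by rewrite -sorted_pairwise ?iota_ltn_sorted //; exact: ltn_trans.
  have s3 : allrel ltn filt (iota M0 (8 - size filt)).
    by apply/allrelP => a b /fltM; rewrite mem_iota; lia.
  by rewrite pairwise_cat s1 s2 s3.
have ae : all (fun i => i < M0 + 8)%N e.
  apply/allP => u; rewrite mem_cat mem_iota => /orP[/fltM|]; lia.
have inE : forall u, u \in U -> u \in e.
  move=> u uU; rewrite mem_cat mem_filter uU mem_iota /=.
  by move/allP: aU => /(_ u uU) ->.
have oke : forall u, u \in e -> okmv p p' u.
  move=> u; rewrite mem_cat => /orP[|].
    by rewrite mem_filter => /andP[h _]; apply: okU.
  rewrite mem_iota /okmv => h; apply/orP; right; apply/orP; right; lia.
set e' := map (mv p p') e.
have srt' : sorted ltn e'.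
  apply: (homo_sorted_in (P := fun u => okmv p p' u)); last exact: srt.
    by move=> u v hu hv; apply: mv_homo.
  by apply/allP.
have se' : size e' = 8%N by rewrite size_map.
have ae' : all (fun i => i < M0 + 8)%N e'.
  apply/allP => u /mapP[v ve ->]; rewrite /mv; case: eqP => _; first lia.
  by move/allP: ae => /(_ v ve).
have posX : forall k, (k < 4)%N -> nth 0%N X k \in e.
  by move=> k hk; apply: inE; rewrite mem_cat mem_nth ?sX.
have posY : forall k, (k < 4)%N -> nth 0%N Y k \in e.
  by move=> k hk; apply: inE; rewrite mem_cat mem_nth ?sY ?orbT.
have ix : forall u, u \in e -> (index u e < 8)%N by move=> u ue; rewrite -se index_mem.
set I := mkI (index (nth 0%N X 0) e) (index (nth 0%N X 1) e) (index (nth 0%N X 2) e) (index (nth 0%N X 3) e).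
set J := mkI (index (nth 0%N Y 0) e) (index (nth 0%N Y 1) e) (index (nth 0%N Y 2) e) (index (nth 0%N Y 3) e).
have := Hhom srt srt' se se' ae ae' I J.
rewrite /cmp /I /J !Dn_mk ?ix ?posX ?posY //.
rewrite /e' !(nth_map 0%N) ?index_mem ?posX ?posY // !nth_index ?posX ?posY //.
rewrite /D4 !(nth_map 0%N) ?sX ?sY //.
Qed.

End Xfer.

Definition T (i : nat) : nat := (4 * i + 4)%N.

Lemma mv_eq p p' : mv p p' p = p'.
Proof. by rewrite /mv eqxx. Qed.
Lemma mv_neq p p' u : u != p -> mv p p' u = u.
Proof. by rewrite /mv => /negbTE ->. Qed.

Section SLevel.
Variable R : realType.
Variable Phi : nat -> nat -> R.
Variable n : nat.
Hypothesis Hpos : forall w x y z, (w < x)%N -> (x < y)%N -> (y < z)%N -> (z < 4 * n + 4)%N ->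
  0 <= DD Phi w x y z.
Hypothesis Hhom : forall l l', sorted ltn l -> sorted ltn l' -> size l = 8%N -> size l' = 8%N ->
  all (fun i => i < 4 * n + 4 + 8)%N l -> all (fun i => i < 4 * n + 4 + 8)%N l' ->
  forall I J, cmp Phi l I J = cmp Phi l' I J.

Local Notation D := (DD Phi).
Local Notation E a b c d := (DD Phi (T a) (T b) (T c) (T d)).
Local Notation M0 := (4 * n + 4)%N.

Lemma Epos a b c d : (a < b)%N -> (b < c)%N -> (c < d)%N -> (d < n)%N -> 0 <= E a b c d.
Proof. move=> *; apply: Hpos; rewrite /T; lia. Qed.

Lemma Lsplit_p a b b' c d : bL Phi -> (a <= b)%N -> (b < b')%N -> (b' < c)%N -> (c < d)%N -> (d < n)%N ->
  E b b' c d <= E a b' c d /\ 15 * E a b' c d <= 16 * E b b' c d.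
Proof.
move=> hb h1 h2 h3 h4 h5.
have p1 := Epos h2 h3 h4 h5.
case: (ltngtP a b) h1 => // [ab|eab] _; last by subst; split; lra.
have e := Dadd_l Phi (T a) (T b) (T b') (T c) (T d).
have p2 := Epos ab (ltn_trans h2 h3) h4 h5.
have q := @Ldom_p R Phi M0 Hpos Hhom (T a) (T b) (T b') (T c) (T d) hb
   ltac:(rewrite /T; lia) ltac:(rewrite /T; lia) ltac:(rewrite /T; lia) ltac:(rewrite /T; lia) ltac:(rewrite /T; lia).
split; lra.
Qed.

Lemma Lsplit_n a a' b c d : ~~ bL Phi -> (a < a')%N -> (a' <= b)%N -> (b < c)%N -> (c < d)%N -> (d < n)%N ->
  E a a' c d <= E a b c d /\ 15 * E a b c d <= 16 * E a a' c d.
Proof.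
move=> hb h1 h2 h3 h4 h5.
have p1 := Epos h1 (leq_ltn_trans h2 h3) h4 h5.
case: (ltngtP a' b) h2 => // [ab|eab] _; last by subst; split; lra.
have e := Dadd_l Phi (T a) (T a') (T b) (T c) (T d).
have p2 := Epos ab h3 h4 h5.
have q := @Ldom_n R Phi M0 Hpos Hhom (T a) (T a') (T b) (T c) (T d) hb
   ltac:(rewrite /T; lia) ltac:(rewrite /T; lia) ltac:(rewrite /T; lia) ltac:(rewrite /T; lia) ltac:(rewrite /T; lia).
split; lra.
Qed.

Lemma Rsplit_p a b c d d' : bR Phi -> (a < b)%N -> (b < c)%N -> (c <= d)%N -> (d < d')%N -> (d' < n)%N ->
  E a b d d' <= E a b c d' /\ 15 * E a b c d' <= 16 * E a b d d'.
Proof.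
move=> hb h1 h2 h3 h4 h5.
have p1 : 0 <= E a b c d' by apply: Epos => //; lia.
have p1' : 0 <= E a b d d' by apply: Epos => //; lia.
case: (ltngtP c d) h3 => // [cd|ecd] _; last by subst; split; lra.
have e := Dadd_r Phi (T a) (T b) (T c) (T d) (T d').
have p2 := Epos h1 h2 cd (ltn_trans h4 h5).
have q := @Rdom_p R Phi M0 Hpos Hhom (T a) (T b) (T c) (T d) (T d') hb
   ltac:(rewrite /T; lia) ltac:(rewrite /T; lia) ltac:(rewrite /T; lia) ltac:(rewrite /T; lia) ltac:(rewrite /T; lia).
split; lra.
Qed.

Lemma Rsplit_n a b c c' d : ~~ bR Phi -> (a < b)%N -> (b < c)%N -> (c < c')%N -> (c' <= d)%N -> (d < n)%N ->
  E a b c c' <= E a b c d /\ 15 * E a b c d <= 16 * E a b c c'.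
Proof.
move=> hb h1 h2 h3 h4 h5.
have p1 : 0 <= E a b c c' by apply: Epos => //; lia.
case: (ltngtP c' d) h4 => // [cd|ecd] _; last by subst; split; lra.
have e := Dadd_r Phi (T a) (T b) (T c) (T c') (T d).
have p2 : 0 <= E a b c' d by apply: Epos => //; lia.
have q := @Rdom_n R Phi M0 Hpos Hhom (T a) (T b) (T c) (T c') (T d) hb
   ltac:(rewrite /T; lia) ltac:(rewrite /T; lia) ltac:(rewrite /T; lia) ltac:(rewrite /T; lia) ltac:(rewrite /T; lia).
split; lra.
Qed.

Lemma amp_core x0 x1 x2 x3 y0 y1 y2 y3 p p' :
  (x0 < x1)%N -> (x1 < x2)%N -> (x2 < x3)%N -> (x3 < M0)%N ->
  (y0 < y1)%N -> (y1 < y2)%N -> (y2 < y3)%N -> (y3 < M0)%N ->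
  (p < M0)%N -> (p' < M0)%N ->
  (forall u, u \in [:: x0; x1; x2; x3; y0; y1; y2; y3] -> okmv p p' u) ->
  (p = x0 -> p < p')%N -> (p = x2 -> p < p')%N -> (p = x1 -> p' < p)%N -> (p = x3 -> p' < p)%N ->
  8 * D y0 y1 y2 y3 <= D (mv p p' y0) (mv p p' y1) (mv p p' y2) (mv p p' y3) ->
  D y0 y1 y2 y3 <= D x0 x1 x2 x3 ->
  8 * D y0 y1 y2 y3 <= D x0 x1 x2 x3.
Proof.
move=> hx1 hx2 hx3 hx4 hy1 hy2 hy3 hy4 pM p'M ok d0 d2 d1 d3 gr le.
have ok' : forall u, u \in [:: x0; x1; x2; x3] ++ [:: y0; y1; y2; y3] -> okmv p p' u by [].
have aU : all (fun u => u < M0)%N ([:: x0; x1; x2; x3] ++ [:: y0; y1; y2; y3]).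
  by rewrite /=; lia.
have xf := @xfer R Phi M0 Hhom [:: x0; x1; x2; x3] [:: y0; y1; y2; y3] p p' erefl erefl aU pM p'M ok'.
have okx : forall u, u \in [:: x0; x1; x2; x3; y0; y1; y2; y3] -> okmv p p' u := ok.
have m := fun u v hu hv => @mv_homo p p' u v (ok u hu) (ok v hv).
have px := Hpos hx1 hx2 hx3 hx4.
have py := Hpos hy1 hy2 hy3 hy4.
have f1 := m x0 x1 ltac:(by rewrite !inE eqxx) ltac:(by rewrite !inE eqxx ?orbT) hx1.
have f2 := m x1 x2 ltac:(by rewrite !inE eqxx ?orbT) ltac:(by rewrite !inE eqxx ?orbT) hx2.
have f3 := m x2 x3 ltac:(by rewrite !inE eqxx ?orbT) ltac:(by rewrite !inE eqxx ?orbT) hx3.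
have g1 := m y0 y1 ltac:(by rewrite !inE eqxx ?orbT) ltac:(by rewrite !inE eqxx ?orbT) hy1.
have g2 := m y1 y2 ltac:(by rewrite !inE eqxx ?orbT) ltac:(by rewrite !inE eqxx ?orbT) hy2.
have g3 := m y2 y3 ltac:(by rewrite !inE eqxx ?orbT) ltac:(by rewrite !inE eqxx ?orbT) hy3.
have mvM : forall u, (u < M0)%N -> (mv p p' u < M0)%N by move=> u hu; rewrite /mv; case: eqP.
have pmx := Hpos f1 f2 f3 (mvM _ hx4).
have pmy := Hpos g1 g2 g3 (mvM _ hy4).
move: xf; rewrite /D4 /= !ger0_norm // le => /esym/idP hm.
suff sh : D (mv p p' x0) (mv p p' x1) (mv p p' x2) (mv p p' x3) <= D x0 x1 x2 x3 by lra.
have [e0|n0] := eqVneq x0 p.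
  subst p; move: f1 f2 f3; rewrite mv_eq !mv_neq; try lia.
  move=> f1 f2 f3; have := Dadd_l Phi x0 p' x1 x2 x3.
  have := @Hpos x0 p' x2 x3 (d0 erefl) ltac:(lia) hx3 hx4; lra.
have [e1|n1] := eqVneq x1 p.
  subst p; move: f1 f2 f3; rewrite mv_eq !mv_neq; try lia.
  move=> f1 f2 f3; have := Dadd_l Phi x0 p' x1 x2 x3.
  have := Hpos (d1 erefl) hx2 hx3 hx4; lra.
have [e2|n2] := eqVneq x2 p.
  subst p; move: f1 f2 f3; rewrite mv_eq !mv_neq; try lia.
  move=> f1 f2 f3; have := Dadd_r Phi x0 x1 x2 p' x3.
  have := Hpos hx1 hx2 (d2 erefl) p'M; lra.
have [e3|n3] := eqVneq x3 p.
  subst p; move: f1 f2 f3; rewrite mv_eq !mv_neq; try lia.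
  move=> f1 f2 f3; have := Dadd_r Phi x0 x1 x2 p' x3.
  have := @Hpos x0 x1 p' x3 hx1 ltac:(lia) (d3 erefl) hx4; lra.
rewrite !mv_neq //; lra.
Qed.


Lemma okT_up j k : okmv (T j) (T j + 3) (T k).
Proof. rewrite /okmv /T; lia. Qed.
Lemma okT_dn j k : okmv (T j) (T j - 3) (T k).
Proof. rewrite /okmv /T; lia. Qed.

Local Notation Cell a b := (E a a.+1 b b.+1).

Lemma amp a b c d : (a.+1 < b)%N -> (b.+1 < n)%N -> (c.+1 < d)%N -> (d.+1 < n)%N ->
  ((a != c) || (b != d)) -> Cell c d <= Cell a b -> 8 * Cell c d <= Cell a b.
Proof.
move=> h1 h2 h3 h4 hne le.
have oku : forall p p', (forall k, okmv p p' (T k)) ->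
   forall u, u \in [:: T a; T a.+1; T b; T b.+1; T c; T c.+1; T d; T d.+1] -> okmv p p' u.
  move=> p p' hk u; rewrite !inE.
  by repeat (case/orP; first by move/eqP->); move/eqP->.
case: (boolP ((c != a) && (c != b))) => [/andP[ca cb]|hc].
  case: (boolP (bL Phi)) => hb.
    apply: (@amp_core _ _ _ _ _ _ _ _ (T c.+1) (T c.+1 + 3)) => //; try (by apply: oku => k; apply: okT_up); rewrite /T; try lia.
    rewrite mv_eq !mv_neq; try (rewrite /T; lia).
    apply: (@Lgrow_p R Phi M0 Hpos Hhom) => //; rewrite /T; lia.
  apply: (@amp_core _ _ _ _ _ _ _ _ (T c) (T c - 3)) => //; try (by apply: oku => k; apply: okT_dn); rewrite /T; try lia.
  rewrite mv_eq !mv_neq; try (rewrite /T; lia).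
  apply: (@Lgrow_n R Phi M0 Hpos Hhom) => //; rewrite /T; lia.
have [da db] : d != a /\ d != b by lia.
case: (boolP (bR Phi)) => hb.
  apply: (@amp_core _ _ _ _ _ _ _ _ (T d.+1) (T d.+1 + 3)) => //; try (by apply: oku => k; apply: okT_up); rewrite /T; try lia.
  rewrite mv_eq !mv_neq; try (rewrite /T; lia).
  apply: (@Rgrow_p R Phi M0 Hpos Hhom) => //; rewrite /T; lia.
apply: (@amp_core _ _ _ _ _ _ _ _ (T d) (T d - 3)) => //; try (by apply: oku => k; apply: okT_dn); rewrite /T; try lia.
rewrite mv_eq !mv_neq; try (rewrite /T; lia).
apply: (@Rgrow_n R Phi M0 Hpos Hhom) => //; rewrite /T; lia.
Qed.

Lemma cellsep a b c d : (a.+1 < b)%N -> (b.+1 < n)%N -> (c.+1 < d)%N -> (d.+1 < n)%N ->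
  ((a != c) || (b != d)) -> 8 * Cell c d <= Cell a b \/ 8 * Cell a b <= Cell c d.
Proof.
move=> h1 h2 h3 h4 hne.
case: (lerP (Cell c d) (Cell a b)) => h.
  by left; apply: amp.
right; apply: amp => //; first by lia.
exact: ltW.
Qed.

End SLevel.

Definition good_sigma {R : realType} (n : nat) (sg : nat -> nat -> R) :=
 ((forall i j, (i < j)%N -> (j < n)%N -> 0 <= sg i j) \/ (forall i j, (i < j)%N -> (j < n)%N -> sg i j <= 0)) /\
 (forall i j i' j', (i < j)%N -> (j < n)%N -> (i' < j')%N -> (j' < n)%N -> (i != i') || (j != j') ->
    2 * `|sg i' j'| <= `|sg i j| \/ 2 * `|sg i j| <= `|sg i' j'|).

Section Cases.
Variable R : realType.
Variable Phi : nat -> nat -> R.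
Variable n : nat.
Hypothesis Hpos : forall w x y z, (w < x)%N -> (x < y)%N -> (y < z)%N -> (z < 4 * n + 4)%N ->
  0 <= DD Phi w x y z.
Hypothesis Hhom : forall l l', sorted ltn l -> sorted ltn l' -> size l = 8%N -> size l' = 8%N ->
  all (fun i => i < 4 * n + 4 + 8)%N l -> all (fun i => i < 4 * n + 4 + 8)%N l' ->
  forall I J, cmp Phi l I J = cmp Phi l' I J.

Local Notation D := (DD Phi).
Local Notation E a b c d := (DD Phi (T a) (T b) (T c) (T d)).
Local Notation Cell a b := (E a a.+1 b b.+1).
Local Notation M0 := (4 * n + 4)%N.

Lemma Epos' a b c d : (a < b)%N -> (b < c)%N -> (c < d)%N -> (d < n)%N -> 0 <= E a b c d.
Proof. exact: (Epos Hpos). Qed.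

Lemma sep_generic (sg : nat -> nat -> R) (good : nat -> nat -> bool) (ka kb : nat -> nat -> nat) :
  (forall i j, (i < j)%N -> (j < n)%N -> ~~ good i j -> sg i j = 0) ->
  (forall i j, (i < j)%N -> (j < n)%N -> good i j ->
     [/\ ((ka i j).+1 < kb i j)%N, ((kb i j).+1 < n)%N,
         Cell (ka i j) (kb i j) <= `|sg i j| & `|sg i j| <= 2 * Cell (ka i j) (kb i j)]) ->
  (forall i j i' j', good i j -> good i' j' -> ka i j = ka i' j' -> kb i j = kb i' j' -> i = i' /\ j = j') ->
  forall i j i' j', (i < j)%N -> (j < n)%N -> (i' < j')%N -> (j' < n)%N -> (i != i') || (j != j') ->
    2 * `|sg i' j'| <= `|sg i j| \/ 2 * `|sg i j| <= `|sg i' j'|.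
Proof.
move=> hz hc hinj i j i' j' h1 h2 h3 h4 hne.
case: (boolP (good i j)) => g1; last by right; rewrite hz // normr0 mulr0.
case: (boolP (good i' j')) => g2; last by left; rewrite hz // normr0 mulr0.
have [a1 a2 a3 a4] := hc _ _ h1 h2 g1.
have [b1 b2 b3 b4] := hc _ _ h3 h4 g2.
have dk : (ka i j != ka i' j') || (kb i j != kb i' j').
  case: (eqVneq (ka i j) (ka i' j')) => //= e1; case: (eqVneq (kb i j) (kb i' j')) => //= e2.
  by have [ei ej] := hinj _ _ _ _ g1 g2 e1 e2; move: hne; rewrite ei ej !eqxx.
have p1 : 0 <= Cell (ka i j) (kb i j) by apply: Epos' => //; lia.
have p2 : 0 <= Cell (ka i' j') (kb i' j') by apply: Epos' => //; lia.
case: (cellsep Hpos Hhom a1 a2 b1 b2 dk) => h; [left|right]; lra.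
Qed.

Lemma case_pp : bL Phi -> bR Phi -> exists rho1 rho2 : nat -> R,
  good_sigma n (fun i j => Phi (T i) (T j) - rho1 i - rho2 j).
Proof.
move=> hL hR.
exists (fun i => if i == 0%N then 0 else Phi (T i) (T i.+1) - Phi (T 0) (T i.+1)).
exists (fun j => Phi (T 0) (T j)).
set sg := fun i j => _.
have sgE : forall i j, sg i j = if i == 0%N then 0 else E 0 i i.+1 j.
  by move=> i j; rewrite /sg /DD; case: eqP => [->|_]; lra.
have sg0 : forall i j, (i < j)%N -> (j < n)%N -> ~~ ((0 < i) && (i.+1 < j))%N -> sg i j = 0.
  move=> i j h1 h2 h; rewrite sgE; case: eqP => // i0.
  have -> : j = i.+1 by lia.
  exact: Ddeg_r.
split.
  left => i j h1 h2; rewrite sgE; case: eqP => // i0.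
  case: (ltngtP i.+1 j) => [h|h|<-]; last by rewrite Ddeg_r.
  - apply: Epos' => //; lia.
  - lia.
apply: (sep_generic (good := fun i j => ((0 < i) && (i.+1 < j))%N) (ka := fun i j => i.-1) (kb := fun i j => j.-1)) => //.
  move=> i j h1 h2 /andP[g1 g2].
  rewrite sgE; case: eqP => [i0|_]; first lia.
  have [l1 l2] := Lsplit_p Hpos Hhom (a := 0) (b := i.-1) (b' := i) (c := i.+1) (d := j) hL ltac:(lia) ltac:(lia) ltac:(lia) ltac:(lia) ltac:(lia).
  have [r1 r2] := Rsplit_p Hpos Hhom (a := i.-1) (b := i) (c := i.+1) (d := j.-1) (d' := j) hR ltac:(lia) ltac:(lia) ltac:(lia) ltac:(lia) ltac:(lia).
  have pp : 0 <= E 0 i i.+1 j by apply: Epos' => //; lia.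
  rewrite (ger0_norm pp) !prednK; try lia.
  split; try lia; lra.
move=> i j i' j' /andP[? ?] /andP[? ?] e1 e2; lia.
Qed.


Lemma case_nn : ~~ bL Phi -> ~~ bR Phi -> exists rho1 rho2 : nat -> R,
  good_sigma n (fun i j => Phi (T i) (T j) - rho1 i - rho2 j).
Proof.
move=> hL hR.
exists (fun i => Phi (T i) (T n.-1)).
exists (fun j => Phi (T j.-1) (T j) - Phi (T j.-1) (T n.-1)).
set sg := fun i j => _.
have sgE : forall i j, sg i j = E i j.-1 j n.-1.
  by move=> i j; rewrite /sg /DD; lra.
have sg0 : forall i j, (i < j)%N -> (j < n)%N -> ~~ ((i.+1 < j) && (j.+1 < n))%N -> sg i j = 0.
  move=> i j h1 h2 h; rewrite sgE.
  case: (boolP (i.+1 < j)%N) h => h3 /= h.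
    by rewrite (_ : n.-1 = j); [rewrite Ddeg_r|lia].
  by rewrite (_ : j.-1 = i); [rewrite Ddeg_l|lia].
split.
  left => i j h1 h2.
  case: (boolP ((i.+1 < j) && (j.+1 < n))%N) => g; last by rewrite sg0.
  rewrite sgE; apply: Epos'; lia.
apply: (sep_generic (good := fun i j => ((i.+1 < j) && (j.+1 < n))%N) (ka := fun i j => i) (kb := fun i j => j)) => //.
  move=> i j h1 h2 /andP[g1 g2].
  rewrite sgE.
  have [l1 l2] := Lsplit_n Hpos Hhom (a := i) (a' := i.+1) (b := j.-1) (c := j) (d := n.-1) hL ltac:(lia) ltac:(lia) ltac:(lia) ltac:(lia) ltac:(lia).
  have [r1 r2] := Rsplit_n Hpos Hhom (a := i) (b := i.+1) (c := j) (c' := j.+1) (d := n.-1) hR ltac:(lia) ltac:(lia) ltac:(lia) ltac:(lia) ltac:(lia).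
  have pp : 0 <= E i j.-1 j n.-1 by apply: Epos' => //; lia.
  rewrite (ger0_norm pp).
  split; try lia; lra.
Qed.

Lemma case_pn : bL Phi -> ~~ bR Phi -> exists rho1 rho2 : nat -> R,
  good_sigma n (fun i j => Phi (T i) (T j) - rho1 i - rho2 j).
Proof.
move=> hL hR.
exists (fun i => Phi (T i) (T n.-1) - Phi (T 0) (T n.-1)).
exists (fun j => Phi (T 0) (T j)).
set sg := fun i j => _.
have sgE : forall i j, sg i j = - E 0 i j n.-1.
  by move=> i j; rewrite /sg /DD; lra.
have sg0 : forall i j, (i < j)%N -> (j < n)%N -> ~~ ((0 < i) && (j.+1 < n))%N -> sg i j = 0.
  move=> i j h1 h2 h; rewrite sgE.
  case: (boolP (0 < i)%N) h => h3 /= h.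
    by rewrite (_ : n.-1 = j); [rewrite Ddeg_r oppr0|lia].
  by rewrite (_ : i = 0%N); [rewrite Ddeg_l oppr0|lia].
split.
  right => i j h1 h2.
  case: (boolP ((0 < i) && (j.+1 < n))%N) => g; last by rewrite sg0.
  rewrite sgE oppr_le0; apply: Epos'; lia.
apply: (sep_generic (good := fun i j => ((0 < i) && (j.+1 < n))%N) (ka := fun i j => i.-1) (kb := fun i j => j)) => //.
  move=> i j h1 h2 /andP[g1 g2].
  rewrite sgE normrN.
  have [l1 l2] := Lsplit_p Hpos Hhom (a := 0) (b := i.-1) (b' := i) (c := j) (d := n.-1) hL ltac:(lia) ltac:(lia) ltac:(lia) ltac:(lia) ltac:(lia).
  have [r1 r2] := Rsplit_n Hpos Hhom (a := i.-1) (b := i) (c := j) (c' := j.+1) (d := n.-1) hR ltac:(lia) ltac:(lia) ltac:(lia) ltac:(lia) ltac:(lia).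
  have pp : 0 <= E 0 i j n.-1 by apply: Epos' => //; lia.
  rewrite (ger0_norm pp) prednK; last by lia.
  split; try lia; lra.
move=> i j i' j' /andP[? ?] /andP[? ?] e1 e2; lia.
Qed.

Fixpoint Gp (b : nat) : R :=
  if b is b'.+1 then Gp b' + (Phi (T b'.-1) (T b'.+1) - Phi (T b'.-1) (T b')) else 0.

Lemma case_np : ~~ bL Phi -> bR Phi -> exists rho1 rho2 : nat -> R,
  good_sigma n (fun i j => Phi (T i) (T j) - rho1 i - rho2 j).
Proof.
move=> hL hR.
exists (fun i => Phi (T i) (T i.+1) - Gp i.+1).
exists (fun j => Gp j).
set sg := fun i j => _.
have sgS : forall i j, sg i j.+1 = sg i j - E i j.-1 j j.+1.
  by move=> i j; rewrite /sg /= /DD; lra.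
have sg1 : forall i, sg i i.+1 = 0 by move=> i; rewrite /sg; lra.
have sg2 : forall i, sg i i.+2 = 0 by move=> i; rewrite sgS sg1 Ddeg_l; lra.
have key : forall i k, (i.+2 + k < n)%N ->
   [/\ 0 <= - sg i (i.+2 + k)%N, 15 * (- sg i (i.+2 + k)%N) <= 16 * E i i.+1 i.+2 (i.+2 + k)%N
     & (0 < k)%N -> E i i.+1 (i.+2 + k)%N.-1 (i.+2 + k)%N <= - sg i (i.+2 + k)%N].
  move=> i; elim => [|k IH] hk.
    by rewrite !addn0 sg2 Ddeg_r; split => //; lra.
  have [a1 a2 _] := IH ltac:(lia).
  rewrite addnS sgS.
  set j := (i.+2 + k)%N in a1 a2 hk *.
  have px : 0 <= E i j.-1 j j.+1 by apply: Epos' => //; lia.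
  have [l1 l2] := Lsplit_n Hpos Hhom (a := i) (a' := i.+1) (b := j.-1) (c := j) (d := j.+1) hL ltac:(lia) ltac:(lia) ltac:(lia) ltac:(lia) ltac:(lia).
  have ad := Dadd_r Phi (T i) (T i.+1) (T i.+2) (T j) (T j.+1).
  split => //; try lra.
split.
  right => i j h1 h2.
  case: (ltngtP j i.+2) => hj.
  - by rewrite (_ : j = i.+1); [rewrite sg1|lia].
  - have [k ek] : exists k, j = (i.+2 + k)%N by exists (j - i.+2)%N; lia.
    have [a1 _ _] := key i k ltac:(lia); rewrite ek; lra.
  - by rewrite hj sg2.
apply: (sep_generic (good := fun i j => (i.+2 < j)%N) (ka := fun i j => i) (kb := fun i j => j.-1)) => //.
  move=> i j h1 h2 g; rewrite /negb; case: ltnP g => //= g _.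
  case: (ltngtP j i.+2) g => //= hj _; first by rewrite (_ : j = i.+1); [rewrite sg1|lia].
  by rewrite hj sg2.
  move=> i j h1 h2 g.
  have [k ek] : exists k, j = (i.+2 + k)%N by exists (j - i.+2)%N; lia.
  have [a1 a2 a3] := key i k ltac:(lia).
  rewrite -ek in a1 a2 a3.
  have a3' := a3 ltac:(lia).
  have [r1 r2] := Rsplit_p Hpos Hhom (a := i) (b := i.+1) (c := i.+2) (d := j.-1) (d' := j) hR ltac:(lia) ltac:(lia) ltac:(lia) ltac:(lia) ltac:(lia).
  have pc : 0 <= E i i.+1 j.-1 j by apply: Epos' => //; lia.
  have sn : sg i j <= 0 by lra.
  rewrite (ler0_norm sn).
  rewrite prednK; last by lia.
  split; try lia; lra.
move=> i j i' j' ? ? e1 e2; lia.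
Qed.

End Cases.

Lemma main_cases {R : realType} (Phi : nat -> nat -> R) (n : nat)
  (Hpos : forall w x y z, (w < x)%N -> (x < y)%N -> (y < z)%N -> (z < 4 * n + 4)%N ->
    0 <= DD Phi w x y z)
  (Hhom : forall l l', sorted ltn l -> sorted ltn l' -> size l = 8%N -> size l' = 8%N ->
    all (fun i => i < 4 * n + 4 + 8)%N l -> all (fun i => i < 4 * n + 4 + 8)%N l' ->
    forall I J, cmp Phi l I J = cmp Phi l' I J) :
  exists rho1 rho2 : nat -> R, good_sigma n (fun i j => Phi (T i) (T j) - rho1 i - rho2 j).
Proof.
case: (boolP (bL Phi)) => hL; case: (boolP (bR Phi)) => hR.
- exact: case_pp.
- exact: case_pn.
- exact: case_np.
- exact: case_nn.
Qed.

Definition Bits := (Idx * Idx + Idx)%type.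
Definition rho0 : nat := #|{: Bits}|.
Definition rr : nat := #|{: {ffun Bits -> bool}}|.
Lemma rr_eq : rr = (2 ^ rho0)%N.
Proof. by rewrite /rr card_ffun card_bool. Qed.
Lemma rr_pos : (0 < rr)%N.
Proof. by rewrite rr_eq expn_gt0. Qed.

Definition bitsf {R : realType} (phi : nat -> nat -> R) (l : seq nat) : {ffun Bits -> bool} :=
  [ffun b : Bits => match b with inl IJ => cmp phi l (fst IJ) (snd IJ) | inr K => (0 <= Dn phi l K) end].
Definition chi {R : realType} (phi : nat -> nat -> R) (l : seq nat) : nat :=
  nat_of_ord (enum_rank (bitsf phi l)).

Lemma chi_lt {R : realType} (phi : nat -> nat -> R) l : (chi phi l < rr)%N.
Proof. exact: ltn_ord. Qed.

Lemma chi_inj {R : realType} (phi : nat -> nat -> R) l l' :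
  chi phi l = chi phi l' -> bitsf phi l = bitsf phi l'.
Proof. by move=> /val_inj /enum_rank_inj. Qed.

Definition Cst : nat := (cY rho0 7 * (rho0.+1 * (18 * 2 ^ rho0) ^ 2))%N.

Lemma Cst_pos : (0 < Cst)%N.
Proof.
rewrite /Cst muln_gt0 cY_ge1 /= muln_gt0 /= expn_gt0 muln_gt0 /= expn_gt0 //.
Qed.

Lemma bound_RB n : (0 < n)%N -> (RB rr (4 * n + 4 + 8) 7 <= tw 8 (Cst * n ^ 3))%N.
Proof.
move=> n0.
rewrite rr_eq; apply: leq_trans (RB_bound rho0 _ (ltn0Sn 6)) _.
rewrite /tw; change (iter 8.-1 (fun y => 2 ^ y)%N) with (iter 7 f2); apply: iter_mono.
rewrite /Cst -!mulnA leq_mul2l; apply/orP; right.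
rewrite leq_mul2l; apply/orP; right.
set A := (2 ^ rho0)%N.
have A1 : (1 <= A)%N by rewrite expn_gt0.
have h1 : (A * (4 * n + 4 + 8) + 2 <= 18 * A * n)%N by nia.
have h2 : ((A * (4 * n + 4 + 8) + 2) ^ 2 <= (18 * A * n) ^ 2)%N by rewrite leq_exp2r.
apply: (leq_trans h2); rewrite expnMn.
have : (n ^ 2 <= n ^ 3)%N by rewrite leq_pexp2l.
rewrite (mulnC 18); nia.
Qed.

Lemma good_sigma_neg {R : realType} n (sg : nat -> nat -> R) :
  good_sigma n sg -> good_sigma n (fun i j => - sg i j).
Proof.
move=> [[h|h] h2]; split.
- by right => i j a b; rewrite oppr_le0; apply: h.
- by move=> *; rewrite !normrN; apply: h2.
- by left => i j a b; rewrite oppr_ge0; apply: h.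
- by move=> *; rewrite !normrN; apply: h2.
Qed.

Lemma good_sigma_ext {R : realType} n (sg sg' : nat -> nat -> R) :
  (forall i j, sg i j = sg' i j) -> good_sigma n sg -> good_sigma n sg'.
Proof.
move=> e [[h|h] h2]; split.
- by left => i j a b; rewrite -e; apply: h.
- by move=> *; rewrite -!e; apply: h2.
- by right => i j a b; rewrite -e; apply: h.
- by move=> *; rewrite -!e; apply: h2.
Qed.

Lemma DD_neg {R : realType} (Phi : nat -> nat -> R) w x y z :
  DD (fun i j => - Phi i j) w x y z = - DD Phi w x y z.
Proof. rewrite /DD; lra. Qed.

Lemma Dn_neg {R : realType} (Phi : nat -> nat -> R) l I :
  Dn (fun i j => - Phi i j) l I = - Dn Phi l I.
Proof. by case: I => [[[i0 i1] i2] i3]; rewrite /Dn DD_neg. Qed.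

Lemma Dn_map {R : realType} (phi : nat -> nat -> R) (h : nat -> nat) l I : size l = 8%N ->
  Dn phi (map h l) I = Dn (fun i j => phi (h i) (h j)) l I.
Proof.
move=> sl; case: I => [[[i0 i1] i2] i3]; rewrite /Dn /DD.
by rewrite !(nth_map 0%N) ?sl ?ltn_ord.
Qed.

Theorem lemma4p1 :
  exists C : nat, (0 < C)%N /\
  forall (R : realType) (n N : nat), (0 < n)%N ->
    (tw 8 (C * n ^ 3) <= N)%N ->
    forall phi : nat -> nat -> R,
      exists (S : seq nat) (sigma : nat -> nat -> R),
        [/\ in_range N S, size S = n, equiv_on S sigma phi & exp_separated S sigma].
Proof.
exists Cst; split; first exact: Cst_pos.
move=> R n N n0 hN phi.
set m := (4 * n + 4 + 8)%N.
have srtL : sorted ltn (iota 1 N) := iota_ltn_sorted 1 N.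
have hRB : (RB rr m 7 <= size (iota 1 N))%N.
  by rewrite size_iota; apply: leq_trans (bound_RB n0) hN.
have [H [sHL szH hom]] := ramsey rr_pos (chi_lt phi) srtL hRB.
set h := fun i => nth 0%N H i.
have srtH : sorted ltn H := subseq_sorted ltn_trans sHL srtL.
have hmono : forall i j, (i < j)%N -> (j < m)%N -> (h i < h j)%N.
  move=> i j ij jm; apply: (sorted_ltn_nth ltn_trans 0%N srtH); rewrite ?inE ?szH //.
  exact: ltn_trans ij jm.
have hin : forall i, (i < m)%N -> (1 <= h i <= N)%N.
  move=> i im; have : h i \in iota 1 N by apply: (mem_subseq sHL); rewrite mem_nth ?szH.
  by rewrite mem_iota; lia.
set Phi := fun i j => phi (h i) (h j).
have Hbits : forall l l', sorted ltn l -> sorted ltn l' -> size l = 8%N -> size l' = 8%N ->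
    all (fun i => i < m)%N l -> all (fun i => i < m)%N l' -> bitsf phi (map h l) = bitsf phi (map h l').
  move=> l l' s1 s2 z1 z2 a1 a2; apply: chi_inj.
  have sub : forall l0, sorted ltn l0 -> all (fun i => i < m)%N l0 -> subseq (map h l0) H.
    move=> l0 s0 a0; apply: sorted_subseq_ltn => //.
      apply: (@homo_sorted_in _ _ (fun i => (i < m)%N) h ltn ltn l0) => //.
      by move=> i j _ jm ij; apply: hmono.
    move=> u /mapP[i il ->]; apply: mem_nth; rewrite szH.
    by move/allP: a0 => /(_ i il).
  by apply: hom; rewrite ?sub ?size_map.
have Hhom : forall l l', sorted ltn l -> sorted ltn l' -> size l = 8%N -> size l' = 8%N ->
    all (fun i => i < 4 * n + 4 + 8)%N l -> all (fun i => i < 4 * n + 4 + 8)%N l' ->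
    forall I J, cmp Phi l I J = cmp Phi l' I J.
  move=> l l' s1 s2 z1 z2 a1 a2 I J.
  have := congr1 (fun f : {ffun Bits -> bool} => f (inl (I, J))) (Hbits l l' s1 s2 z1 z2 a1 a2).
  by rewrite /= !ffunE /cmp !Dn_map.
have Hsgn : forall l l', sorted ltn l -> sorted ltn l' -> size l = 8%N -> size l' = 8%N ->
    all (fun i => i < m)%N l -> all (fun i => i < m)%N l' ->
    forall K, (0 <= Dn Phi l K) = (0 <= Dn Phi l' K).
  move=> l l' s1 s2 z1 z2 a1 a2 K.
  have := congr1 (fun f : {ffun Bits -> bool} => f (inr K)) (Hbits l l' s1 s2 z1 z2 a1 a2).
  by rewrite /= !ffunE !Dn_map.
have Hs : forall w x y z, (w < x)%N -> (x < y)%N -> (y < z)%N -> (z < 4 * n + 4)%N ->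
    (0 <= DD Phi w x y z) = (0 <= DD Phi 0 1 2 3).
  move=> w x y z h1 h2 h3 h4.
  set l := [:: w; x; y; z; (4 * n + 4)%N; (4 * n + 5)%N; (4 * n + 6)%N; (4 * n + 7)%N].
  have sl : sorted ltn l by rewrite /l /=; lia.
  have al : all (fun i => i < m)%N l by rewrite /l /m /=; lia.
  have s0 : sorted ltn (iota 0 8) := iota_ltn_sorted 0 8.
  have a0 : all (fun i => i < m)%N (iota 0 8) by apply/allP => i; rewrite mem_iota /m; lia.
  have := Hsgn l (iota 0 8) sl s0 erefl erefl al a0 (mkI 0 1 2 3).
  by rewrite !Dn_mk.
have [r1 [r2 gs]] : exists r1 r2 : nat -> R,
    good_sigma n (fun i j => Phi (T i) (T j) - r1 i - r2 j).
  case: (boolP (0 <= DD Phi 0 1 2 3)) => hs.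
    apply: main_cases => //.
    by move=> w x y z h1 h2 h3 h4; rewrite Hs.
  have Hpos' : forall w x y z, (w < x)%N -> (x < y)%N -> (y < z)%N -> (z < 4 * n + 4)%N ->
      0 <= DD (fun i j => - Phi i j) w x y z.
    move=> w x y z h1 h2 h3 h4; rewrite DD_neg oppr_ge0.
    by have := Hs w x y z h1 h2 h3 h4; rewrite (negbTE hs) => /negbT; rewrite -ltNge => /ltW.
  have Hhom' : forall l l', sorted ltn l -> sorted ltn l' -> size l = 8%N -> size l' = 8%N ->
      all (fun i => i < 4 * n + 4 + 8)%N l -> all (fun i => i < 4 * n + 4 + 8)%N l' ->
      forall I J, cmp (fun i j => - Phi i j) l I J = cmp (fun i j => - Phi i j) l' I J.
    by move=> *; rewrite /cmp !Dn_neg !normrN; apply: Hhom.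
  have [r1 [r2 g]] := main_cases Hpos' Hhom'.
  exists (fun i => - r1 i), (fun j => - r2 j).
  apply: good_sigma_ext (good_sigma_neg g) => i j /=; lra.
set S := map (fun i => h (T i)) (iota 0 n).
have szS : size S = n by rewrite size_map size_iota.
have Tm : forall i, (i < n)%N -> (T i < m)%N by move=> i; rewrite /T /m; lia.
have nthS : forall i, (i < n)%N -> nth 0%N S i = h (T i).
  by move=> i hi; rewrite (nth_map 0%N) ?size_iota // nth_iota.
have srtS : sorted ltn S.
  apply: (@homo_sorted_in _ _ (fun i => (i < n)%N) (fun i => h (T i)) ltn ltn (iota 0 n)).
  - move=> i j _ jn ij; apply: hmono; last exact: Tm.
    by rewrite /T; lia.
  - by apply/allP => i; rewrite mem_iota.
  - exact: iota_ltn_sorted.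
have uS : uniq S := sorted_uniq ltn_trans ltnn srtS.
have memS : forall a, a \in S -> [/\ (index a S < n)%N & a = h (T (index a S))].
  move=> a aS; split; first by rewrite -szS index_mem.
  by rewrite -nthS ?nth_index // -szS index_mem.
have ordS : forall a b, a \in S -> b \in S -> (a < b)%N -> (index a S < index b S)%N.
  move=> a b aS bS ab.
  have [i1 e1] := memS a aS; have [j1 e2] := memS b bS.
  case: (ltngtP (index a S) (index b S)) => // h1.
    have := hmono (T (index b S)) (T (index a S)) ltac:(rewrite /T; lia) (Tm _ i1).
    by rewrite -e1 -e2; lia.
  by move: ab; rewrite e1 e2 h1; lia.
have sgE : forall a b, a \in S -> b \in S ->
    phi a b - r1 (index a S) - r2 (index b S) = Phi (T (index a S)) (T (index b S)) - r1 (index a S) - r2 (index b S).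
  move=> a b aS bS; have [_ e1] := memS a aS; have [_ e2] := memS b bS.
  by rewrite /Phi -e1 -e2.
exists S, (fun a b => phi a b - r1 (index a S) - r2 (index b S)).
case: gs => gsg gsep.
split.
- split => // a aS; have [i1 ->] := memS a aS; exact: hin (Tm _ i1).
- exact: szS.
- by exists (fun a => r1 (index a S)), (fun b => r2 (index b S)).
split.
  case: gsg => hg; [left|right] => a b aS bS ab; rewrite sgE //; apply: hg;
    [exact: ordS | by have [] := memS b bS | exact: ordS | by have [] := memS b bS].
move=> a b a' b' aS bS ab a'S b'S a'b' ne.
rewrite !sgE //; apply: gsep; try exact: ordS; try (by have [] := memS b bS); try (by have [] := memS b' b'S).
case: (eqVneq (index a S) (index a' S)) => [ea|] //=; case: (eqVneq (index b S) (index b' S)) => [eb|] //=.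
exfalso; apply: ne.
have [_ e1] := memS a aS; have [_ e2] := memS b bS; have [_ e3] := memS a' a'S; have [_ e4] := memS b' b'S.
by rewrite e1 e2 e3 e4 ea eb.
Qed.
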